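(* Let $\Omega=(a,b)\subset\mathbb{R}$ be a bounded interval with $a=kh$, $b=lh$ for a mesh size $h>0$ and integers $k,l$ with $l-k>1$. Then $$\sum_{x\in\Omega_h}\frac{u(x)^2}{\operatorname{dist}(x,\partial\Omega_h)^2}\le4\sum_{x\in\overline{\Omega}_h\setminus\partial^+\Omega_h}\big(D_h^+u(x)\big)^2$$ for all $u\in W_0^{1,2}(\overline{\Omega}_h)$.
   Context: $\overline{\Omega}_h=[a,b]\cap h\mathbb{Z}$, $\Omega_h=(a,b)\cap h\mathbb{Z}$, $\partial\Omega_h=\{a,b\}$, $\partial^+\Omega_h=\{b\}$, $D_h^+u(x)=\frac{u(x+h)-u(x)}{h}$. $W_0^{1,2}(\overline{\Omega}_h)$ is the set of $u:\overline{\Omega}_h\to\mathbb{R}$ with $u(a)=u(b)=0$. $\operatorname{dist}(x,\partial\Omega_h)=\min\{x-a,b-x\}$. *)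

(* Defs.v *)
From Stdlib Require Import Reals Lra Lia ZArith.
Open Scope R_scope.

(* Finite sum over integers j with m <= j <= n (empty, i.e. 0, if n < m). *)
Definition zsum (m n : Z) (f : Z -> R) : R :=
  if (n <? m)%Z then 0
  else sum_f_R0 (fun i => f (m + Z.of_nat i)%Z) (Z.to_nat (n - m)).

Definition Dhp (h : R) (u : R -> R) (x : R) : R := (u (x + h) - u x) / h.

Definition distb (a b x : R) : R := Rmin (x - a) (b - x).

(* Main.v *)
Require Import Defs.
From Stdlib Require Import Reals Lra Lia ZArith.
Open Scope R_scope.
Lemma step (j h x y : R) : 0 <= j -> 0 < h -> (j = 0 -> y = 0) ->
  x^2/((j+1)*h)^2 <= 4*((x-y)/h)^2 + 2*y^2/(j*h^2) - 2*x^2/((j+1)*h^2).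
Proof.
  intros Hj Hh Hy.
  destruct (Req_dec j 0) as [E|E].
  - rewrite (Hy E). subst j.
    replace (2*0^2/(0*h^2)) with 0 by (unfold Rdiv; ring).
    replace (0+1) with 1 by ring.
    assert (0 <= x^2/h^2).
    { unfold Rdiv. apply Rmult_le_pos. nra. left; apply Rinv_0_lt_compat; nra. }
    replace (x^2/(1*h)^2) with (x^2/h^2) by (field; lra).
    replace (4*((x-0)/h)^2) with (4*(x^2/h^2)) by (field; lra).
    replace (2*x^2/(1*h^2)) with (2*(x^2/h^2)) by (field; lra).
    lra.
  - assert (Hj' : 0 < j) by lra.
    set (a := x/(j+1)). set (b := y/j).
    assert (Q : 0 <= 4*((j+1)*a - j*b)^2 + 2*j*b^2 - 2*(j+1)*a^2 - a^2).
    { assert (0 <= j*(a-b)^2) by (apply Rmult_le_pos; [lra | apply pow2_ge_0]).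
      assert (0 <= (a - 2*((j+1)*a - j*b))^2) by apply pow2_ge_0.
      replace (4*((j+1)*a - j*b)^2 + 2*j*b^2 - 2*(j+1)*a^2 - a^2) with (2*(j*(a-b)^2) + (a - 2*((j+1)*a - j*b))^2) by ring. lra. }
    assert (Ex : x = (j+1)*a) by (unfold a; field; lra).
    assert (Ey : y = j*b) by (unfold b; field; lra).
    assert (R0 : 0 <= (4*((j+1)*a - j*b)^2 + 2*j*b^2 - 2*(j+1)*a^2 - a^2)/h^2).
    { unfold Rdiv. apply Rmult_le_pos. exact Q. left; apply Rinv_0_lt_compat; nra. }
    assert (EE : 4*((x-y)/h)^2 + 2*y^2/(j*h^2) - 2*x^2/((j+1)*h^2) - x^2/((j+1)*h)^2
       = (4*((j+1)*a - j*b)^2 + 2*j*b^2 - 2*(j+1)*a^2 - a^2)/h^2).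
    { rewrite Ex, Ey. field. lra. }
    lra.
Qed.

Lemma tele (F G Phi : nat -> R) (N : nat) :
  (forall i, (i <= N)%nat -> F i <= G i + Phi i - Phi (S i)) ->
  sum_f_R0 F N <= sum_f_R0 G N + Phi 0%nat - Phi (S N).
Proof.
  induction N as [|N IH]; intros H.
  - simpl. apply H. lia.
  - simpl. assert (A := IH (fun i Hi => H i ltac:(lia))). assert (B := H (S N) ltac:(lia)). lra.
Qed.
Lemma inv_nonneg z : 0 <= z -> 0 <= / z.
Proof. intros H. destruct (Req_dec z 0) as [E|E]. subst; rewrite Rinv_0; lra.
  left; apply Rinv_0_lt_compat; lra. Qed.

Lemma frac_nonneg a z : 0 <= z -> 0 <= 2 * a^2 / z.
Proof. intros H. unfold Rdiv. apply Rmult_le_pos. assert (0 <= a^2) by apply pow2_ge_0. lra.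
  now apply inv_nonneg. Qed.

Lemma core (v : nat -> R) (p : nat) (h : R) : 0 < h -> v 0%nat = 0 -> v (S (S p)) = 0 ->
  sum_f_R0 (fun i => v (S i) ^2 / (Rmin (INR (S i) * h) ((INR (S (S p)) - INR (S i)) * h))^2) p
  <= 4 * sum_f_R0 (fun i => ((v (S i) - v i)/h)^2) (S p).
Proof.
  intros Hh H0 Hn.
  assert (Dpos : forall i, 0 <= ((v (S i) - v i)/h)^2) by (intro; apply pow2_ge_0).
  assert (Hh2 : 0 <= h^2) by apply pow2_ge_0.
  eapply Rle_trans.
  apply (tele _ (fun i => ((v (S (S i)) - v (S i))/h)^2 * 4)
     (fun i => if Nat.leb (2 * S i) (S (S p)) then 2 * v i ^2 / (INR i * h^2) + 4 * ((v (S i) - v i)/h)^2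
               else - (2 * v (S i) ^2 / ((INR (S (S p)) - INR (S i)) * h^2)))).
  - intros i Hi. cbv beta.
    destruct (Nat.leb_spec (2 * S i) (S (S p))) as [L1|L1];
    destruct (Nat.leb_spec (2 * S (S i)) (S (S p))) as [L2|L2].
    +
      assert (Hs := step (INR i) h (v (S i)) (v i) (pos_INR i) Hh
        ltac:(intro E; destruct i; [exact H0| rewrite S_INR in E; pose proof (pos_INR i); lra])).
      rewrite Rmin_left.
      2:{ apply Rmult_le_compat_r; [lra|]. apply le_INR in L1. rewrite mult_INR in L1. simpl (INR 2) in L1. lra. }
      rewrite !S_INR in *. lra.
    + assert (Hs := step (INR i) h (v (S i)) (v i) (pos_INR i) Hh
        ltac:(intro E; destruct i; [exact H0| rewrite S_INR in E; pose proof (pos_INR i); lra])).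
      rewrite Rmin_left.
      2:{ apply Rmult_le_compat_r; [lra|]. apply le_INR in L1. rewrite mult_INR in L1. simpl (INR 2) in L1. lra. }
      assert (0 <= 2 * v (S (S i)) ^2 / ((INR (S (S p)) - INR (S (S i))) * h^2)).
      { apply frac_nonneg. apply Rmult_le_pos; [|lra]. apply Rge_le, Rge_minus, Rle_ge, le_INR. lia. }
      assert (0 <= 2 * v (S i) ^2 / (INR (S i) * h^2)) by (apply frac_nonneg; apply Rmult_le_pos; [apply pos_INR|lra]).
      rewrite !S_INR in *. pose proof (Dpos i). pose proof (Dpos (S i)). lra.
    + lia.
    +
      assert (EK : INR (S (S p)) - INR (S i) = INR (p - i) + 1).
      { rewrite minus_INR by lia. rewrite !S_INR. ring. }
      assert (EK2 : INR (S (S p)) - INR (S (S i)) = INR (p - i)).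
      { rewrite minus_INR by lia. rewrite !S_INR. ring. }
      assert (Hs := step (INR (p - i)) h (v (S i)) (v (S (S i))) (pos_INR _) Hh
        ltac:(intro E; assert (p - i = 0)%nat by (apply INR_eq; simpl; exact E);
              replace (S (S i)) with (S (S p)) by lia; exact Hn)).
      rewrite Rmin_right.
      2:{ apply Rmult_le_compat_r; [lra|]. apply lt_INR in L1. rewrite mult_INR in L1. simpl (INR 2) in L1.
          rewrite !S_INR in L1 |- *. lra. }
      rewrite EK, EK2.
      replace (((v (S (S i)) - v (S i)) / h) ^ 2) with (((v (S i) - v (S (S i))) / h) ^ 2)
        by (unfold Rdiv; ring).
      lra.
  - rewrite <- scal_sum.
    rewrite (decomp_sum _ (S p)) by lia. simpl pred.
    cbv beta.
    replace (Nat.leb (2 * 1) (S (S p))) with true by (symmetry; apply Nat.leb_le; lia).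
    replace (Nat.leb (2 * S (S p)) (S (S p))) with false by (symmetry; apply Nat.leb_gt; lia).
    rewrite Hn, H0. simpl (INR 0).
    replace (2 * 0 ^ 2 / (0 * h ^ 2)) with 0 by (unfold Rdiv; ring).
    replace (2 * 0 ^ 2 / ((INR (S (S p)) - INR (S (S p))) * h ^ 2)) with 0 by (unfold Rdiv; ring).
    lra.
Qed.

Theorem mainTheorem19 (h : R) (k l : Z) (u : R -> R) :
  0 < h -> (l - k > 1)%Z ->
  u (IZR k * h) = 0 -> u (IZR l * h) = 0 ->
  zsum (k + 1) (l - 1)
    (fun j => (u (IZR j * h)) ^ 2 / (distb (IZR k * h) (IZR l * h) (IZR j * h)) ^ 2)
  <= 4 * zsum k (l - 1) (fun j => (Dhp h u (IZR j * h)) ^ 2).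
Proof.
  intros Hh Hkl Hk Hl.
  set (p := (Z.to_nat (l - k) - 2)%nat).
  assert (El : l = (k + Z.of_nat (S (S p)))%Z) by (unfold p; lia).
  set (v := fun j : nat => u ((IZR k + INR j) * h)).
  assert (Hv : forall (z : Z) (j : nat), z = (k + Z.of_nat j)%Z -> u (IZR z * h) = v j).
  { intros z j ->. unfold v. f_equal. rewrite plus_IZR, <- INR_IZR_INZ. reflexivity. }
  unfold zsum.
  replace (l - 1 <? k + 1)%Z with false by (symmetry; apply Z.ltb_ge; lia).
  replace (l - 1 <? k)%Z with false by (symmetry; apply Z.ltb_ge; lia).
  replace (Z.to_nat (l - 1 - (k + 1))) with p by (unfold p; lia).
  replace (Z.to_nat (l - 1 - k)) with (S p) by (unfold p; lia).
  eapply Rle_trans; [| eapply Rle_trans; [apply (core v p h Hh) |]].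
  - right. apply sum_eq. intros i Hi.
    rewrite (Hv _ (S i)) by lia.
    f_equal. f_equal. unfold distb. f_equal.
    + rewrite S_INR, !plus_IZR, <- INR_IZR_INZ. ring.
    + rewrite El, !plus_IZR, <- !INR_IZR_INZ, !S_INR. ring.
  - rewrite <- Hk. unfold v. f_equal. simpl. ring.
  - rewrite <- Hl. unfold v. f_equal. rewrite El, plus_IZR, <- INR_IZR_INZ. reflexivity.
  - right. f_equal. apply sum_eq. intros i Hi.
    unfold Dhp. rewrite (Hv _ i) by lia. f_equal. f_equal. f_equal.
    symmetry. rewrite <- (Hv (k + Z.of_nat i + 1)%Z (S i)) by lia. f_equal.
    rewrite !plus_IZR. ring.
Qed.
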